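(* Let $(V,\langle\cdot\,,\cdot\rangle_V)$ be an admissible integral $\mathrm{Cl}_{r,s}$-module and $(U,\langle\cdot\,,\cdot\rangle_U)$ an admissible integral $\mathrm{Cl}_{4,4}$-module such that the representations $J_{y_j}\in\mathrm{End}(U)$ permute the integral basis of $U$ up to sign for all orthonormal generators $y_j$ of $\mathrm{Cl}_{4,4}$. Then $V\otimes U$ with the scalar product $\langle v\otimes u,v'\otimes u'\rangle=\langle v,v'\rangle_V\langle u,u'\rangle_U$ is (carries the structure of) an admissible integral $\mathrm{Cl}_{r+4,s+4}$-module.
   Context: A scalar product is a real symmetric non-degenerate bilinear form. $\mathrm{Cl}_{p,q}$ is the real Clifford algebra generated by $\mathbb R^{p,q}$ ($\mathbb R^{p+q}$ with quadratic form $x_1^2+\dots+x_p^2-x_{p+1}^2-\dots-x_{p+q}^2$) with relation $z^2=-\langle z,z\rangle\cdot1$; orthonormal generators $z_k$ satisfy $\langle z_k,z_l\rangle=0$ ($k\ne l$), $\langle z_k,z_k\rangle=\pm1$. A $\mathrm{Cl}_{p,q}$-module $V$ with representation $J$ is admissible if it carries a scalar product with $\langle J_zu,v\rangle_V=-\langle u,J_zv\rangle_V$ for all $z,u,v$; it is an admissible integral module if it has an integral basis, i.e. a basis $\{v_\alpha\}$ with $\langle v_\alpha,v_\beta\rangle_V=0$ ($\alpha\ne\beta$), $\langle v_\alpha,v_\alpha\rangle_V=\pm1$, and $\langle J_{z_k}v_\alpha,v_\beta\rangle_V\in\{1,-1,0\}$ for all orthonormal generators $z_k$ and all $\alpha,\beta$.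 An operator permutes a basis up to sign if it sends each basis vector to $\pm$ some basis vector. *)

(* Defs.v *)
From mathcomp Require Import all_boot all_order all_algebra.
From mathcomp Require Import reals.
From mathcomp Require Export mxtens.
Set Implicit Arguments. Unset Strict Implicit. Unset Printing Implicit Defensive.
Import Order.TTheory GRing.Theory Num.Theory.
Local Open Scope ring_scope.

Section CliffordDefs.
Variable R : realType.

(* <z_k, z_k> for the standard orthonormal generators z_k of R^{p,q}:
   +1 for the first p generators, -1 for the last q. *)
Definition csig (p q : nat) (k : 'I_(p + q)) : R := if (k < p)%N then 1 else -1.

Definition is_Cl_rep (p q n : nat) (J : 'I_(p + q) -> 'M[R]_n) : Prop :=
  (forall k, J k *m J k = - (csig k)%:M) /\
  (forall k l, k != l -> J k *m J l = - (J l *m J k)).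

Definition Jz (p q n : nat) (J : 'I_(p + q) -> 'M[R]_n) (z : 'rV[R]_(p + q)) : 'M[R]_n :=
  \sum_k z 0 k *: J k.

Definition is_scalar_product (n : nat) (S : 'M[R]_n) : Prop :=
  S^T = S /\ S \in unitmx.

Definition sp (n : nat) (S : 'M[R]_n) (u v : 'cV[R]_n) : R := (u^T *m S *m v) 0 0.

Definition admissible (p q n : nat) (J : 'I_(p + q) -> 'M[R]_n) (S : 'M[R]_n) : Prop :=
  is_Cl_rep J /\ is_scalar_product S /\
  forall z u v, sp S (Jz J z *m u) v = - sp S u (Jz J z *m v).

Definition integral_basis (p q n : nat) (J : 'I_(p + q) -> 'M[R]_n) (S : 'M[R]_n)
  (B : 'M[R]_n) : Prop :=
  B \in unitmx /\
  (forall a b, a != b -> sp S (col a B) (col b B) = 0) /\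
  (forall a, sp S (col a B) (col a B) = 1 \/ sp S (col a B) (col a B) = -1) /\
  (forall k a b, let x := sp S (J k *m col a B) (col b B) in x = 1 \/ x = -1 \/ x = 0).

Definition admissible_integral (p q n : nat) (J : 'I_(p + q) -> 'M[R]_n) (S : 'M[R]_n) : Prop :=
  admissible J S /\ exists B, integral_basis J S B.

Definition permutes_up_to_sign (n : nat) (A B : 'M[R]_n) : Prop :=
  forall a, exists b, A *m col a B = col b B \/ A *m col a B = - col b B.

End CliffordDefs.

(* Main.v *)
Require Import Defs.
From mathcomp Require Import all_boot all_order all_algebra.
From mathcomp Require Import reals mxtens ring zify.
Import GRing.Theory Num.Theory.
Local Open Scope ring_scope.

Section Omega.
Variables (R : realType) (m : nat) (K : 'I_(4 + 4) -> 'M[R]_m).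
Hypothesis Ksq : forall k, K k *m K k = - (csig R k)%:M.
Hypothesis Kac : forall k l, k != l -> K k *m K l = - (K l *m K k).

Definition P (s : seq 'I_(4+4)) : 'M[R]_m := foldr (fun j M => K j *m M) 1%:M s.

Lemma P_comm s j : P s *m K j = (-1)^+(count (predC1 j) s) *: (K j *m P s).
Proof.
elim: s => [|i s IH] /=; first by rewrite mul1mx mulmx1 scale1r.
rewrite -mulmxA IH -scalemxAr !mulmxA.
case: (eqVneq i j) => [->|ij] /=; first by rewrite add0n.

by rewrite [K j *m K i]Kac 1?eq_sym // mulNmx add1n exprS mulN1r scaleNr scalerN opprK.
Qed.

Lemma P_sq i s : i \notin s ->
  P (i :: s) *m P (i :: s) = ((-1)^+size s * - csig R i) *: (P s *m P s).
Proof.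
move=> ni /=.
have Hc : count (predC1 i) s = size s.
  apply/eqP; rewrite -all_count; apply/allP => x xs /=.
  by apply/eqP => ex; move: ni; rewrite -ex xs.
rewrite -mulmxA (mulmxA (P s)) P_comm Hc -scalemxAl -scalemxAr !mulmxA Ksq.
by rewrite -(raddfN (@scalar_mx _ _)) -mulmxA mul_scalar_mx scalerA.
Qed.

Lemma P_rcons t i : P (rcons t i) = P t *m K i.
Proof. by elim: t => [|j t IH] /=; rewrite ?mulmx1 ?mul1mx // IH mulmxA. Qed.

Lemma P_rev s : P s *m P (rev s) = (\prod_(i <- s) - csig R i)%:M.
Proof.
elim: s => [|i s IH] /=; first by rewrite big_nil mulmx1.
rewrite rev_cons P_rcons big_cons -mulmxA !mulmxA -(mulmxA (K i)) IH.
by rewrite -mulmxA mul_scalar_mx -scalemxAr Ksq -(raddfN (@scalar_mx _ _)) scale_scalar_mx mulrC.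
Qed.

Hypothesis SU : 'M[R]_m.
Hypothesis Kskew : forall k, (K k)^T *m SU = - (SU *m K k).

Lemma P_tr s : (P s)^T *m SU = (-1)^+ size s *: (SU *m P (rev s)).
Proof.
elim: s => [|i s IH] /=; first by rewrite trmx1 mul1mx mulmx1 scale1r.
rewrite trmx_mul -mulmxA Kskew mulmxN mulmxA IH rev_cons P_rcons.
by rewrite -scalemxAl -mulmxA exprS mulN1r scaleNr.
Qed.

Lemma P_perm (BU : 'M[R]_m) s : (forall j, permutes_up_to_sign (K j) BU) ->
  permutes_up_to_sign (P s) BU.
Proof.
move=> HK; elim: s => [|i s IH] /= a; first by exists a; left; rewrite mul1mx.
have [b Hb] := IH a; have [c Hc] := HK i b.
exists c; rewrite -mulmxA; case: Hb => ->; rewrite ?mulmxN; case: Hc => ->;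
 rewrite ?opprK; by [left|right].
Qed.

Definition s0 : seq 'I_(4+4) := [:: inord 0; inord 1; inord 2; inord 3; inord 4; inord 5; inord 6; inord 7].
Definition Om := P s0.

Lemma Om_sq : Om *m Om = 1%:M.
Proof.
rewrite /Om /s0.
do 8! (rewrite P_sq; last by rewrite ?in_nil // !inE -!val_eqE /= !inordK).
rewrite /= mulmx1 !scalerA /csig !inordK //=.
rewrite -[RHS]scale1r; congr (_ *: _); ring.
Qed.

Lemma Om_ac j : Om *m K j = - (K j *m Om).
Proof.
rewrite /Om P_comm.
have -> : count (predC1 j) s0 = 7%N.
  case: j => -[|[|[|[|[|[|[|[|j]]]]]]]] Hj //=; rewrite /s0 /= -!val_eqE /= !inordK //.
by rewrite -signr_odd /= expr1 scaleN1r.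
Qed.

Lemma Om_rev : P (rev s0) = Om.
Proof.
have h := P_rev s0.
have hc : \prod_(i <- s0) - csig R i = 1.
  rewrite /s0 !big_cons big_nil /csig !inordK //=; ring.
rewrite hc -/Om in h.
by rewrite -[P _]mul1mx -Om_sq -mulmxA h mulmx1.
Qed.

Lemma Om_tr : Om^T *m SU = SU *m Om.
Proof. by rewrite /Om P_tr Om_rev -signr_odd /= expr0 scale1r. Qed.
End Omega.

Section Gen.
Variable R : realType.

Lemma ent n (M : 'M[R]_n) a b : ((delta_mx (0 : 'I_1) a : 'M[R]_(1,n)) *m M *m (delta_mx b (0 : 'I_1) : 'M[R]_(n,1))) 0 0 = M a b.
Proof. by rewrite -rowE -colE !mxE. Qed.

Lemma ent2 n (X Y : 'M[R]_n) a b : ((delta_mx (0 : 'I_1) a : 'M[R]_(1,n)) *m X *m Y *m (delta_mx b (0 : 'I_1) : 'M[R]_(n,1))) 0 0 = (X *m Y) a b.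
Proof. by rewrite -[RHS]ent !mulmxA. Qed.

Lemma sp_col n (S B : 'M[R]_n) a b : sp S (col a B) (col b B) = (B^T *m S *m B) a b.
Proof. by rewrite /sp !colE trmx_mul trmx_delta -[RHS]ent !mulmxA. Qed.

Lemma sp_Acol n (S A B : 'M[R]_n) a b :
  sp S (A *m col a B) (col b B) = (B^T *m A^T *m S *m B) a b.
Proof. by rewrite /sp !colE !trmx_mul trmx_delta -[RHS]ent !mulmxA. Qed.

Lemma skew_of_adm n (S A : 'M[R]_n) :
  (forall u v, sp S (A *m u) v = - sp S u (A *m v)) -> A^T *m S = - (S *m A).
Proof.
move=> H; apply/matrixP => a b.
have := H (delta_mx a 0) (delta_mx b 0).
rewrite /sp trmx_mul !trmx_delta !mulmxA !ent2 => ->.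
by rewrite !mxE.
Qed.

Lemma adm_of_skew n (S A : 'M[R]_n) :
  A^T *m S = - (S *m A) -> forall u v, sp S (A *m u) v = - sp S u (A *m v).
Proof.
move=> H u v; rewrite /sp trmx_mul -(mulmxA u^T) H mulmxN mulNmx !mulmxA.
by rewrite mxE.
Qed.

Lemma Jz_skew p q n (L : 'I_(p+q) -> 'M[R]_n) S :
  (forall k, (L k)^T *m S = - (S *m L k)) ->
  forall z, (Jz L z)^T *m S = - (S *m Jz L z).
Proof.
move=> H z; rewrite /Jz raddf_sum mulmx_suml mulmx_sumr -sumrN; apply: eq_bigr => k _.
rewrite /=; have -> : (z 0 k *: L k)^T = z 0 k *: (L k)^T by apply/matrixP => i j; rewrite !mxE.
by rewrite -scalemxAl H scalerN -scalemxAr.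
 
Qed.

Lemma Jz_e p q n (L : 'I_(p+q) -> 'M[R]_n) k : Jz L (delta_mx 0 k) = L k.
Proof.
rewrite /Jz (bigD1 k) //= mxE !eqxx /= scale1r big1 ?addr0 // => i ik.
by rewrite mxE (negbTE ik) andbF scale0r.
Qed.

Lemma tensNmx a b c d (A : 'M[R]_(a,b)) (B : 'M[R]_(c,d)) : (- A) *t B = - (A *t B).
Proof. by apply/matrixP => i j; rewrite !mxE mulNr. Qed.

Lemma tensmxN a b c d (A : 'M[R]_(a,b)) (B : 'M[R]_(c,d)) : A *t (- B) = - (A *t B).
Proof. by apply/matrixP => i j; rewrite !mxE mulrN. Qed.

Lemma tens_scalar n m (x y : R) : (x%:M : 'M_n) *t (y%:M : 'M_m) = (x * y)%:M.
Proof.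
apply/matrixP => i j.
case: (mxtens_indexP i) => i1 i2; case: (mxtens_indexP j) => j1 j2.
rewrite tensmxE !mxE (can_eq (@mxtens_indexK _ _)) xpair_eqE.
by case: (i1 == j1); case: (i2 == j2); rewrite /= ?mulr1n ?mulr0n ?mulr0 ?mul0r.
Qed.

Lemma unit0 k (A : 'M[R]_k) : k = 0%N -> A \in unitmx.
Proof. by move=> e; subst k; rewrite unitmxE det_mx00 unitr1. Qed.

Lemma tens_unit n m (A : 'M[R]_n) (B : 'M[R]_m) :
  A \in unitmx -> B \in unitmx -> A *t B \in unitmx.
Proof.
move=> uA uB; case: (eqVneq n 0%N) => [e|n0]; first by apply: unit0; rewrite e.
case: (eqVneq m 0%N) => [e|m0]; first by apply: unit0; rewrite e muln0.
exact: tensmx_unit.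
Qed.

Lemma sp_tens n m (SV BV : 'M[R]_n) (SU BU : 'M[R]_m) a1 a2 b1 b2 :
  sp (SV *t SU) (col (mxtens_index (a1, a2)) (BV *t BU)) (col (mxtens_index (b1, b2)) (BV *t BU))
  = sp SV (col a1 BV) (col b1 BV) * sp SU (col a2 BU) (col b2 BU).
Proof. by rewrite !sp_col !trmx_tens !tensmx_mul tensmxE. Qed.

Lemma sp_tensA n m (SV BV A : 'M[R]_n) (SU BU C : 'M[R]_m) a1 a2 b1 b2 :
  sp (SV *t SU) ((A *t C) *m col (mxtens_index (a1, a2)) (BV *t BU))
     (col (mxtens_index (b1, b2)) (BV *t BU))
  = sp SV (A *m col a1 BV) (col b1 BV) * sp SU (C *m col a2 BU) (col b2 BU).
Proof. by rewrite !sp_Acol !trmx_tens !tensmx_mul tensmxE. Qed.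

Definition tri (x : R) := x = 1 \/ x = -1 \/ x = 0.

Lemma tri_mul x y : tri x -> tri y -> tri (x * y).
Proof.
rewrite /tri; case=> [->|[->|->]]; case=> [->|[->|->]]; rewrite ?mulr1 ?mul1r ?mulr0 ?mul0r ?mulN1r ?opprK; auto.
Qed.

Lemma sp_N n (S : 'M[R]_n) u v : sp S (- u) v = - sp S u v.
Proof. by rewrite /sp raddfN /= !mulNmx mxE. Qed.

Lemma gram_tri n p q (J : 'I_(p+q) -> 'M[R]_n) S B a b :
  integral_basis J S B -> tri (sp S (col a B) (col b B)).
Proof.
move=> [_ [Ho [Hd _]]]; case: (eqVneq a b) => [<-|ab]; last by rewrite /tri Ho //; auto.
by case: (Hd a) => ->; rewrite /tri; auto.
Qed.
End Gen.

Section Idx.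
Variables (r s : nat).
Definition vidx (k : 'I_((r+4)+(s+4))) : option 'I_(r+s) :=
  if (k < r)%N then insub (k : nat)
  else if (k < r+4)%N then None
  else if (k < r+4+s)%N then insub (k - 4)%N else None.
Definition uidx (k : 'I_((r+4)+(s+4))) : 'I_(4+4) :=
  inord (if (k < r+4)%N then k - r else k - r - s)%N.

Lemma vidx_some k i : vidx k = Some i ->
  ((k < r)%N /\ (i : nat) = k) \/ ((r+4 <= k < r+4+s)%N /\ (i : nat) = (k - 4)%N).
Proof.
rewrite /vidx; case: ifP => h1.
  by case: insubP => [u _ Vu [<-]|//]; left.
case: ifP => h2 //; case: ifP => h3 //.
case: insubP => [u _ Vu [<-]|//]; right; split => //; lia.
Qed.

Lemma vidx_none k : vidx k = None ->
  ((r <= k < r+4)%N /\ (uidx k : nat) = (k - r)%N) \/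
  ((r+4+s <= k)%N /\ (uidx k : nat) = (k - r - s)%N).
Proof.
have kl := ltn_ord k.
rewrite /vidx /uidx; case: ifP => h1.
  by case: insubP => [//|]; move/negP; lia.
case: ifP => h2.
  by move=> _; left; rewrite inordK; [split => //; lia|lia].
case: ifP => h3.
  by case: insubP => [//|]; move/negP; lia.
by move=> _; right; rewrite inordK; [split => //; lia|lia].
Qed.

Lemma csig_some (R : realType) k i : vidx k = Some i -> csig R k = csig R i.
Proof.
move/vidx_some; rewrite /csig => H; case: ifP => h1; case: ifP => h2 //; exfalso; lia.
Qed.

Lemma csig_none (R : realType) k : vidx k = None -> csig R k = csig R (uidx k).
Proof.
move/vidx_none; rewrite /csig => H; case: ifP => h1; case: ifP => h2 //; exfalso; lia.
Qed.

Lemma vidx_inj k l i : vidx k = Some i -> vidx l = Some i -> k = l.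
Proof. move=> /vidx_some H1 /vidx_some H2; apply: val_inj => /=; lia. Qed.

Lemma uidx_inj k l : vidx k = None -> vidx l = None -> uidx k = uidx l -> k = l.
Proof.
move=> /vidx_none H1 /vidx_none H2 /(f_equal val) /= e; apply: val_inj => /=; lia.
Qed.
End Idx.

Theorem theorem7p3 (R : realType) (r s n m : nat)
  (J : 'I_(r + s) -> 'M[R]_n) (SV : 'M[R]_n)
  (K : 'I_(4 + 4) -> 'M[R]_m) (SU : 'M[R]_m) :
  admissible_integral J SV ->
  admissible K SU ->
  (exists BU : 'M[R]_m, integral_basis K SU BU /\
     forall j, permutes_up_to_sign (K j) BU) ->
  exists L : 'I_((r + 4) + (s + 4)) -> 'M[R]_(n * m),
    admissible_integral L (SV *t SU).
Proof.
move=> [[[HJsq HJac] [[HSVsym HSVu] HJadm]] [BV HBV]]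
       [[HKsq HKac] [[HSUsym HSUu] HKadm]] [BU [HBU HBUp]].
have JS k : (J k)^T *m SV = - (SV *m J k).
  by apply: skew_of_adm => u v; rewrite -(Jz_e _ _ _ _ J k); apply: HJadm.
have KS k : (K k)^T *m SU = - (SU *m K k).
  by apply: skew_of_adm => u v; rewrite -(Jz_e _ _ _ _ K k); apply: HKadm.
pose O := Om R m K.
have Osq : O *m O = 1%:M by apply: Om_sq.
have Oac j : O *m K j = - (K j *m O) by apply: Om_ac.
have Otr : O^T *m SU = SU *m O by apply: Om_tr.
pose L (k : 'I_((r + 4) + (s + 4))) : 'M[R]_(n * m) :=
  match vidx r s k with Some i => J i *t O | None => 1%:M *t K (uidx r s k) end.
have LS k : (L k)^T *m (SV *t SU) = - ((SV *t SU) *m L k).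
  rewrite /L; case: (vidx r s k) => [i|].
    by rewrite trmx_tens !tensmx_mul JS Otr tensNmx.
  by rewrite trmx_tens trmx1 !tensmx_mul mul1mx mulmx1 KS tensmxN.
exists L; split; [split; [split|split]|].
- move=> k; rewrite /L; case Ek: (vidx r s k) => [i|].
    by rewrite tensmx_mul HJsq Osq tensNmx tens_scalar mulr1 (csig_some _ _ R _ _ Ek).
  by rewrite tensmx_mul mulmx1 HKsq tensmxN tens_scalar mul1r (csig_none _ _ R _ Ek).
- move=> k l kl; rewrite /L; case Ek: (vidx r s k) => [i|]; case El: (vidx r s l) => [j|].
  + have ij : i != j.
      by apply: contraNneq kl => e; rewrite e in Ek; rewrite (vidx_inj _ _ _ _ _ Ek El).
    by rewrite !tensmx_mul HJac // Osq tensNmx.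
  + by rewrite !tensmx_mul mulmx1 mul1mx Oac tensmxN.
  + by rewrite !tensmx_mul mulmx1 mul1mx Oac tensmxN opprK.
  + have ij : uidx r s k != uidx r s l.
      by apply: contraNneq kl => e; rewrite (uidx_inj _ _ _ _ Ek El e).
    by rewrite !tensmx_mul mulmx1 HKac // tensmxN.
- by split; [rewrite trmx_tens HSVsym HSUsym | exact: tens_unit].
- by move=> z; apply: adm_of_skew; apply: Jz_skew.
- exists (BV *t BU).
  have [HBVu [HBVo [HBVd HBVJ]]] := HBV.
  have [HBUu [HBUo [HBUd HBUK]]] := HBU.
  split; first exact: tens_unit.
  split.
    move=> a b; case: (mxtens_indexP a) => a1 a2; case: (mxtens_indexP b) => b1 b2 neq.
    rewrite sp_tens; case: (eqVneq a1 b1) => [e1|n1]; last by rewrite HBVo // mul0r.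
    have n2 : a2 != b2 by apply: contraNneq neq => e2; rewrite e1 e2.
    by rewrite (HBUo _ _ n2) mulr0.
  split.
    move=> a; case: (mxtens_indexP a) => a1 a2; rewrite sp_tens.
    by case: (HBVd a1) => ->; case: (HBUd a2) => ->; rewrite ?mulr1 ?mul1r ?mulN1r ?opprK; auto.
  move=> k a b; cbv zeta.
  case: (mxtens_indexP a) => a1 a2; case: (mxtens_indexP b) => b1 b2.
  rewrite /L; case Ek: (vidx r s k) => [i|]; rewrite sp_tensA; apply: tri_mul.
  + exact: (HBVJ i a1 b1).
  + have [c Hc] := P_perm _ _ K _ s0 HBUp a2.
    rewrite /O /Om; case: Hc => ->; rewrite ?sp_N; first exact: (gram_tri _ _ _ _ _ _ _ c b2 HBU).
    case: (gram_tri _ _ _ _ _ _ _ c b2 HBU) => [->|[->|->]]; rewrite /tri ?opprK ?oppr0; auto.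
  + by rewrite mul1mx; apply: (gram_tri _ _ _ _ _ _ _ a1 b1 HBV).
  + exact: (HBUK (uidx r s k) a2 b2).
Qed.
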